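(* An admissible configuration exists for any affine positive normal monoid $M$ with $\operatorname{rank}(M)\ge2$ and any extremal generator $m\in M$.
   Context: Monoids are commutative, cancellative, with unit. An affine monoid is a finitely generated monoid whose group of differences $\operatorname{gp}(M)$ is torsion free; it is positive if it has no nontrivial units; it is normal if $x\in\operatorname{gp}(M)$ and $nx\in M$ for some $n\in\mathbb N$ imply $x\in M$. Let $M$ be an affine positive normal monoid of rank $r$, with $\operatorname{gp}(M)$ identified with $\mathbb Z^r$. For a rational affine hyperplane $\mathcal H\subset\mathbb R^r\setminus\{0\}$ with $\mathbb R_+M=\mathbb R_+\big((\mathbb R_+M)\cap\mathcal H\big)$, put $\Phi(L)=(\mathbb R_+L)\cap\mathcal H$ for a submonoid $L\subset M$, $\Phi(x)=(\mathbb R_+x)\cap\mathcal H$ for a nonzero $x\in M$, and, for a convex set $P\subset\mathcal H$, $M(P)=\{z\in\mathbb Z^r\setminus\{0\}\mid(\mathbb R_+z)\cap\mathcal H\in P\}\cup\{0\}$. An element $m\in M$ is an extremal generator if $\Phi(m)$ is a vertex of $\Phi(M)$ and $m$ generates $(\mathbb R_+m)\cap M\cong\mathbb Z_+$. For polytopes $P\subset Q$ sharing a vertex $v$, $Q$ is tangent to $P$ at $v$ if $\dim P=\dim Q$ and the corner cones spanned by $P$ and $Q$ at $v$ coincide. A pyramid with apex $v$ and base $P$ is $\operatorname{conv}(v,P)$ with $v\notin\operatorname{Aff}(P)$. For an extremal generator $m\in M$, a triple $(\mathcal H,\Delta_1,\Delta_2)$ is an admissible configuration if $\mathcal H\subset\mathbb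 R^r\setminus\{0\}$ is a rational affine hyperplane with $\mathbb R_+M=\mathbb R_+\big((\mathbb R_+M)\cap\mathcal H\big)$, and $\Delta_1,\Delta_2\subset\mathcal H$ are rational pyramids with apex $\Phi(m)$ such that: (a) $\Phi(M)\subset\Delta_1\subset\Delta_2$; (b) $\Delta_1$ and $\Delta_2$ are tangent to $\Phi(M)$ at $\Phi(m)$; (c) $M(\Delta_1)=\mathbb Z_+m+M(F_1)$, where $F_1\subset\Delta_1$ is the facet opposite to $\Phi(m)$; (d) $M(\Delta_2)=\mathbb Z_+m+M(F_2)$, where $F_2\subset\Delta_2$ is the facet opposite to $\Phi(m)$; (e) $F_2\cap\Phi(M)=\emptyset$. *)

(* Defs.v *)
From HB Require Import structures.
From mathcomp Require Import all_boot all_order all_algebra.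
From mathcomp Require Import reals.
Set Implicit Arguments. Unset Strict Implicit. Unset Printing Implicit Defensive.
Import Order.TTheory GRing.Theory Num.Theory.
Local Open Scope ring_scope.

Section Defs.
Variables (R : realType) (r : nat).

Notation vec := 'rV[R]_r.

Definition zR (z : 'rV[int]_r) : vec := map_mx (fun k : int => k%:~R) z.
Definition qR (q : 'rV[rat]_r) : vec := map_mx (fun k : rat => ratr k) q.

Definition dot (x y : vec) : R := \sum_(i < r) x 0 i * y 0 i.

Definition hyperplane (a : 'rV[rat]_r) (b : rat) : vec -> Prop :=
  fun x => dot (qR a) x = ratr b.

Definition ray (x : vec) : vec -> Prop :=
  fun y => exists t : R, 0 <= t /\ y = t *: x.

Definition cone (S : vec -> Prop) : vec -> Prop :=
  fun x => exists (s : seq vec) (t : 'I_(size s) -> R),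
    (forall y, y \in s -> S y) /\ (forall i, 0 <= t i) /\
    x = \sum_(i < size s) t i *: s`_i.

Definition conv (s : seq vec) : vec -> Prop :=
  fun x => exists t : 'I_(size s) -> R,
    (forall i, 0 <= t i) /\ \sum_(i < size s) t i = 1 /\
    x = \sum_(i < size s) t i *: s`_i.

Definition aff (s : seq vec) : vec -> Prop :=
  fun x => exists t : 'I_(size s) -> R,
    \sum_(i < size s) t i = 1 /\ x = \sum_(i < size s) t i *: s`_i.

Definition vertex (C : vec -> Prop) (v : vec) : Prop :=
  C v /\ exists l : vec, forall y, C y -> y <> v -> dot l y < dot l v.

Definition aff_indep_in (C : vec -> Prop) (d : nat) : Prop :=
  exists (p0 : vec) (ps : seq vec),
    C p0 /\ (forall p, p \in ps -> C p) /\ size ps = d /\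
    free [seq p - p0 | p <- ps].

Definition has_dim (C : vec -> Prop) (d : nat) : Prop :=
  aff_indep_in C d /\ ~ aff_indep_in C d.+1.

Definition corner (C : vec -> Prop) (v : vec) : vec -> Prop :=
  fun x => exists (t : R) (y : vec), 0 <= t /\ C y /\ x = t *: (y - v).

Definition set_eq (A B : vec -> Prop) := forall x, A x <-> B x.
Definition subset (A B : vec -> Prop) := forall x, A x -> B x.

Definition tangent (P Q : vec -> Prop) (v : vec) : Prop :=
  subset P Q /\ vertex P v /\ vertex Q v /\
  (exists d, has_dim P d /\ has_dim Q d) /\ set_eq (corner P v) (corner Q v).

Variable M : 'rV[int]_r -> Prop.

Definition affine_positive_normal : Prop :=
  (* finitely generated (hence a submonoid of Z^r) *)
  (exists gens : seq 'rV[int]_r, forall z,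
      M z <-> exists c : 'I_(size gens) -> nat,
                z = \sum_(i < size gens) gens`_i *+ c i) /\
  (forall z : 'rV[int]_r, exists x y, M x /\ M y /\ z = x - y) /\
  (forall x, M x -> M (- x) -> x = 0) /\
  (forall (z : 'rV[int]_r) (n : nat), (0 < n)%N -> M (z *+ n) -> M z).

Definition imM : vec -> Prop := fun x => exists z, M z /\ x = zR z.

Definition PhiM (H : vec -> Prop) : vec -> Prop := fun x => cone imM x /\ H x.

Definition Phi_pt (H : vec -> Prop) (z : 'rV[int]_r) (v : vec) : Prop :=
  forall y, (ray (zR z) y /\ H y) <-> y = v.

Definition good_hyperplane (a : 'rV[rat]_r) (b : rat) : Prop :=
  a != 0 /\ b != 0 /\ set_eq (cone imM) (cone (PhiM (hyperplane a b))).

Definition MP (H P : vec -> Prop) : 'rV[int]_r -> Prop :=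
  fun z => z = 0 \/ (z <> 0 /\ exists y, ray (zR z) y /\ H y /\ P y).

Definition extremal_generator (m : 'rV[int]_r) : Prop :=
  M m /\
  (exists a b v, good_hyperplane a b /\ Phi_pt (hyperplane a b) m v /\
                 vertex (PhiM (hyperplane a b)) v) /\
  (forall z, M z -> (ray (zR m) (zR z) <-> exists k : nat, z = m *+ k)).

Definition rational_pyramid (H : vec -> Prop) (v : vec) (base : seq 'rV[rat]_r) : Prop :=
  H v /\ (forall q, q \in base -> H (qR q)) /\ ~ aff (map qR base) v.

Definition pyramid (v : vec) (base : seq 'rV[rat]_r) : vec -> Prop :=
  conv (v :: map qR base).

Definition facet_opp (base : seq 'rV[rat]_r) : vec -> Prop := conv (map qR base).

Definition admissible_configuration (m : 'rV[int]_r) : Prop :=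
  exists (a : 'rV[rat]_r) (b : rat) (v : vec) (base1 base2 : seq 'rV[rat]_r),
    let H := hyperplane a b in
    let D1 := pyramid v base1 in
    let D2 := pyramid v base2 in
    let F1 := facet_opp base1 in
    let F2 := facet_opp base2 in
    good_hyperplane a b /\ Phi_pt H m v /\
    rational_pyramid H v base1 /\ rational_pyramid H v base2 /\
    subset (PhiM H) D1 /\ subset D1 D2 /\
    tangent (PhiM H) D1 v /\ tangent (PhiM H) D2 v /\
    (forall z, MP H D1 z <-> exists (k : nat) w, MP H F1 w /\ z = m *+ k + w) /\
    (forall z, MP H D2 z <-> exists (k : nat) w, MP H F2 w /\ z = m *+ k + w) /\
    (forall x, F2 x -> ~ PhiM H x).

End Defs.

(* Main.v *)
Require Import Defs.
From HB Require Import structures.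
From mathcomp Require Import all_boot all_order all_algebra.
From mathcomp Require Import reals lra.
Set Implicit Arguments. Unset Strict Implicit. Unset Printing Implicit Defensive.
Import Order.TTheory GRing.Theory Num.Theory.
Local Open Scope ring_scope.

Section Basic.
Variables (R : realType) (r : nat).
Notation vec := 'rV[R]_r.
Implicit Types (x y z : vec).

Lemma dotDr x y z : dot x (y + z) = dot x y + dot x z.
Proof. by rewrite /dot -big_split; apply: eq_bigr => i _; rewrite mxE mulrDr. Qed.
Lemma dotDl x y z : dot (x + y) z = dot x z + dot y z.
Proof. by rewrite /dot -big_split; apply: eq_bigr => i _; rewrite mxE mulrDl. Qed.
Lemma dotZr (c : R) x y : dot x (c *: y) = c * dot x y.
Proof. by rewrite /dot mulr_sumr; apply: eq_bigr => i _; rewrite mxE mulrCA. Qed.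
Lemma dotZl (c : R) x y : dot (c *: x) y = c * dot x y.
Proof. by rewrite /dot mulr_sumr; apply: eq_bigr => i _; rewrite mxE mulrA. Qed.
Lemma dot0r x : dot x 0 = 0.
Proof. by rewrite /dot big1 // => i _; rewrite mxE mulr0. Qed.
Lemma dot0l x : dot 0 x = 0.
Proof. by rewrite /dot big1 // => i _; rewrite mxE mul0r. Qed.
Lemma dotNr x y : dot x (- y) = - dot x y.
Proof. by rewrite -scaleN1r dotZr mulN1r. Qed.
Lemma dotNl x y : dot (- x) y = - dot x y.
Proof. by rewrite -scaleN1r dotZl mulN1r. Qed.
Lemma dotBr x y z : dot x (y - z) = dot x y - dot x z.
Proof. by rewrite dotDr dotNr. Qed.
Lemma dotBl x y z : dot (x - y) z = dot x z - dot y z.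
Proof. by rewrite dotDl dotNl. Qed.
Lemma dot_sumr x I (s : seq I) (P : pred I) (F : I -> vec) :
  dot x (\sum_(i <- s | P i) F i) = \sum_(i <- s | P i) dot x (F i).
Proof. exact: (big_morph _ (dotDr x) (dot0r x)). Qed.

Lemma zRD (a b : 'rV[int]_r) : zR R (a + b) = zR R a + zR R b.
Proof. by apply/rowP => i; rewrite !mxE intrD. Qed.
Lemma zR0 : zR R (0 : 'rV[int]_r) = 0.
Proof. by apply/rowP => i; rewrite !mxE. Qed.
Lemma zRN (a : 'rV[int]_r) : zR R (- a) = - zR R a.
Proof. by apply/rowP => i; rewrite !mxE intrN. Qed.
Lemma zRB (a b : 'rV[int]_r) : zR R (a - b) = zR R a - zR R b.
Proof. by rewrite zRD zRN. Qed.
Lemma zRMn (a : 'rV[int]_r) n : zR R (a *+ n) = zR R a *+ n.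
Proof. by apply/rowP => i; rewrite mulmxnE !mxE mulmxnE rmorphMn. Qed.
Lemma zR_sum I (s : seq I) (P : pred I) (F : I -> 'rV[int]_r) :
  zR R (\sum_(i <- s | P i) F i) = \sum_(i <- s | P i) zR R (F i).
Proof. exact: (big_morph _ zRD zR0). Qed.
Lemma zRZ (k : int) (a : 'rV[int]_r) : zR R (k *: a) = k%:~R *: zR R a.
Proof. by apply/rowP => i; rewrite !mxE intrM. Qed.
Lemma zR_inj : injective (@zR R r).
Proof.
move=> a b /rowP h; apply/rowP => i; have := h i; rewrite !mxE.
by move/eqP; rewrite eqr_int => /eqP.
Qed.

Definition dz (x y : 'rV[int]_r) : int := \sum_i x 0 i * y 0 i.

Lemma dot_zR a b : dot (zR R a) (zR R b) = (dz a b)%:~R.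
Proof. by rewrite /dot /dz rmorph_sum; apply: eq_bigr => i _; rewrite !mxE rmorphM. Qed.

Lemma dzDl a b c : dz (a + b) c = dz a c + dz b c.
Proof. by rewrite /dz -big_split; apply: eq_bigr => i _; rewrite mxE mulrDl. Qed.
Lemma dzDr a b c : dz a (b + c) = dz a b + dz a c.
Proof. by rewrite /dz -big_split; apply: eq_bigr => i _; rewrite mxE mulrDr. Qed.
Lemma dz0r a : dz a 0 = 0.
Proof. by rewrite /dz big1 // => i _; rewrite mxE mulr0. Qed.
Lemma dzNr a b : dz a (- b) = - dz a b.
Proof. by rewrite /dz -sumrN; apply: eq_bigr => i _; rewrite mxE mulrN. Qed.
Lemma dzBr a b c : dz a (b - c) = dz a b - dz a c.
Proof. by rewrite dzDr dzNr. Qed.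
Lemma dzMnr a b n : dz a (b *+ n) = dz a b *+ n.
Proof. by rewrite /dz -sumrMnl; apply: eq_bigr => i _; rewrite mulmxnE mulrnAr. Qed.
Lemma dzMnl a b n : dz (a *+ n) b = dz a b *+ n.
Proof. by rewrite /dz -sumrMnl; apply: eq_bigr => i _; rewrite mulmxnE mulrnAl. Qed.
Lemma dzZl (k : int) a b : dz (k *: a) b = k * dz a b.
Proof. by rewrite /dz mulr_sumr; apply: eq_bigr => i _; rewrite mxE mulrA. Qed.
Lemma dzC a b : dz a b = dz b a.
Proof. by apply: eq_bigr => i _; rewrite mulrC. Qed.

Definition o2n n (t : 'I_n -> R) (k : nat) : R :=
  if insub k is Some i then t i else 0.
Lemma o2nE n (t : 'I_n -> R) (i : 'I_n) : o2n t i = t i.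
Proof. by rewrite /o2n valK. Qed.
Lemma o2n_ge0 n (t : 'I_n -> R) : (forall i, 0 <= t i) -> forall k, 0 <= o2n t k.
Proof. by move=> h k; rewrite /o2n; case: insubP => // i _ _; apply: h. Qed.
Lemma o2n_sum n (t : 'I_n -> R) (F : nat -> vec) :
  \sum_(i < n) t i *: F i = \sum_(0 <= i < n) o2n t i *: F i.
Proof. by rewrite big_mkord; apply: eq_bigr => i _; rewrite o2nE. Qed.
Lemma o2n_sum1 n (t : 'I_n -> R) :
  \sum_(i < n) t i = \sum_(0 <= i < n) o2n t i.
Proof. by rewrite big_mkord; apply: eq_bigr => i _; rewrite o2nE. Qed.

Lemma conv_nat (s : seq vec) y : conv s y <->
  exists l : nat -> R, (forall i, 0 <= l i) /\
    \sum_(0 <= i < size s) l i = 1 /\ y = \sum_(0 <= i < size s) l i *: s`_i.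
Proof.
split.
  case=> t [t0 [t1 ->]]; exists (o2n t); split; first exact: o2n_ge0.
  by rewrite -o2n_sum1 -o2n_sum.
case=> l [l0 [l1 ->]]; exists (fun i => l i); split => //.
split. rewrite -l1 big_mkord //. by rewrite big_mkord.
Qed.

Lemma cone_nat (S : vec -> Prop) y : cone S y <->
  exists (s : seq vec) (l : nat -> R), (forall z, z \in s -> S z) /\
    (forall i, 0 <= l i) /\ y = \sum_(0 <= i < size s) l i *: s`_i.
Proof.
split.
  case=> s [t [hs [t0 ->]]]; exists s, (o2n t); split => //; split.
    exact: o2n_ge0.
  by rewrite -o2n_sum.
case=> s [l [hs [l0 ->]]]; exists s, (fun i => l i); split => //; split => //.
by rewrite big_mkord.
Qed.

Lemma pyr_nat v (s : seq vec) y : conv (v :: s) y <->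
  exists (l0 : R) (w : nat -> R), 0 <= l0 /\ (forall i, 0 <= w i) /\
    l0 + \sum_(0 <= i < size s) w i = 1 /\
    y = l0 *: v + \sum_(0 <= i < size s) w i *: s`_i.
Proof.
rewrite conv_nat /=; split.
  case=> l [l0 [l1 ->]]; exists (l 0%N), (fun i => l i.+1).
  split; first exact: l0. split; first by move=> i.
  by rewrite big_nat_recl in l1; split => //; rewrite big_nat_recl.
case=> l0 [w [hl0 [w0 [w1 ->]]]].
exists (fun k => if k is k'.+1 then w k' else l0); split; first by case.
by split; rewrite big_nat_recl.
Qed.

End Basic.

Lemma psum_nat_eq0 (R : realType) n (F : nat -> R) :
  (forall i, 0 <= F i) -> \sum_(0 <= i < n) F i = 0 -> forall i, (i < n)%N -> F i = 0.
Proof.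
move=> F0; rewrite big_mkord => h i lin.
exact: (@psumr_eq0P R _ xpredT (fun i : 'I_n => F i) (fun i _ => F0 i) h (Ordinal lin) isT).
Qed.

Lemma psum_nat_ge0 (R : realType) n (F : nat -> R) :
  (forall i, 0 <= F i) -> 0 <= \sum_(0 <= i < n) F i.
Proof. by move=> F0; apply: sumr_ge0 => i _. Qed.

Definition pickg r (gZ xstar x : 'rV[int]_r) := if 0 < dz gZ x then x else xstar.
Definition qv (R : realType) r (m hZ gZ : 'rV[int]_r) (c : nat) (y : 'rV[int]_r)
  : 'rV[R]_r :=
  ((c%:R * (dz gZ y)%:~R)^-1) *: (zR R y - (dz hZ y)%:~R *: zR R m).
Definition iQ r (z : 'rV[int]_r) : 'rV[rat]_r := map_mx (fun k : int => k%:~R) z.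
Definition qq r (m hZ gZ : 'rV[int]_r) (c : nat) (y : 'rV[int]_r) : 'rV[rat]_r :=
  ((c%:R * (dz gZ y)%:~R)^-1) *: (iQ y - (dz hZ y)%:~R *: iQ m).
Definition baseL r (m hZ gZ : 'rV[int]_r) c xstar (xs : seq 'rV[int]_r) :=
  [seq qq m hZ gZ c (pickg gZ xstar x) | x <- xs].

Lemma qR_iQ (R : realType) r (z : 'rV[int]_r) : qR R (iQ z) = zR R z.
Proof. by apply/rowP => i; rewrite !mxE ratr_int. Qed.

Lemma qR_qq (R : realType) r (m hZ gZ : 'rV[int]_r) c y :
  qR R (qq m hZ gZ c y) = qv R m hZ gZ c y.
Proof.
apply/rowP => i; rewrite !mxE.
by rewrite rmorphM fmorphV rmorphB rmorphM !rmorphM !rmorph_int rmorph_nat.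
Qed.


Lemma no_aff (R : realType) r (L u : 'rV[R]_r) (C : 'rV[R]_r -> Prop) :
  dot L u != 0 -> (forall y, C y -> dot L y = 1) -> ~ aff_indep_in C r.
Proof.
move=> Lu hC [p0 [ps [Cp0 [Cps [sz fr]]]]].
set Y := [seq p - p0 | p <- ps].
have dY : \dim <<Y>> = r by move: fr; rewrite /free size_map sz => /eqP.
have full : <<Y>>%VS = fullv.
  by apply/eqP; rewrite eqEdim subvf dimvf dim_matrix mul1r dY leqnn.
have : u \in <<in_tuple Y>>%VS by rewrite full memvf.
move/coord_span => eu.
have : dot L u = 0.
  rewrite eu dot_sumr big1 // => i _; rewrite dotZr.
  have : (in_tuple Y)`_i \in Y by rewrite mem_nth // size_tuple.
  by case/mapP => p pin ->; rewrite dotBr !hC ?subrr ?mulr0 //; exact: Cps.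
by move/eqP; rewrite (negbTE Lu).
Qed.

Lemma free_sub (K : fieldType) (vT : vectType K) (X : seq vT) :
  exists Y, {subset Y <= X} /\ free Y /\ (<<X>> <= <<Y>>)%VS.
Proof.
elim: X => [|x X [Y [sY [fY dY]]]].
  by exists [::]; split => //; split; [exact: nil_free | rewrite span_nil sub0v].
case: (boolP (x \in <<Y>>%VS)) => xin.
  exists Y; split; first by move=> y /sY; rewrite inE => ->; rewrite orbT.
  by split => //; rewrite span_cons subv_add -memvE xin dY.
exists (x :: Y); split.
  by move=> y; rewrite !inE => /orP [->|/sY ->] //; rewrite orbT.
split; first by rewrite free_cons xin fY.
by rewrite !span_cons addvS.
Qed.

Lemma aff_mono (R : realType) r (C C' : 'rV[R]_r -> Prop) d :
  (forall y, C y -> C' y) -> aff_indep_in C d -> aff_indep_in C' d.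
Proof.
move=> h [p0 [ps [Cp0 [Cps rest]]]]; exists p0, ps; split; first exact: h.
by split => // p /Cps; apply: h.
Qed.

Section Gen.
Variables (R : realType) (r : nat) (M : 'rV[int]_r -> Prop) (xs : seq 'rV[int]_r).
Variables (m aZ hZ gZ xstar : 'rV[int]_r) (c : nat).
Hypothesis Hgen : forall z, M z <->
  exists cf : 'I_(size xs) -> nat, z = \sum_(i < size xs) xs`_i *+ cf i.
Hypothesis HMm : M m.
Hypothesis c_gt0 : (0 < c)%N.
Hypothesis HaZ : aZ = hZ + gZ *+ c.
Hypothesis Hhm : dz hZ m = 1.
Hypothesis Hgm : dz gZ m = 0.
Hypothesis Hxs : forall x, x \in xs -> 0 < dz gZ x \/ exists k, x = m *+ k.
Hypothesis Hh : forall x, x \in xs -> 0 <= dz hZ x.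
Hypothesis Hstar : xstar \in xs.
Hypothesis Hstarg : 0 < dz gZ xstar.

Local Notation vec := 'rV[R]_r.
Local Notation v := (zR R m).
Local Notation fa y := (dot (zR R aZ) y).
Local Notation fh y := (dot (zR R hZ) y).
Local Notation fg y := (dot (zR R gZ) y).
Local Notation H := (@hyperplane R r (iQ aZ) 1).
Local Notation n := (size xs).
Local Notation Q i := (qv R m hZ gZ c (pickg gZ xstar xs`_i)).
Local Notation base := (baseL m hZ gZ c xstar xs).
Local Notation D := (@pyramid R r v base).
Local Notation F := (@facet_opp R r base).

Lemma H_E y : H y <-> fa y = 1.
Proof. by rewrite /hyperplane qR_iQ rmorph1. Qed.

Lemma a_dec x : dz aZ x = dz hZ x + dz gZ x *+ c.
Proof. by rewrite HaZ dzDl dzMnl. Qed.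

Lemma am : dz aZ m = 1.
Proof. by rewrite a_dec Hhm Hgm mul0rn addr0. Qed.

Lemma fa_v : fa v = 1.
Proof. by rewrite dot_zR am. Qed.
Lemma fh_v : fh v = 1.
Proof. by rewrite dot_zR Hhm. Qed.
Lemma fg_v : fg v = 0.
Proof. by rewrite dot_zR Hgm. Qed.

Lemma dz_ray (L : 'rV[int]_r) k : dz L (m *+ k) = dz L m *+ k.
Proof. exact: dzMnr. Qed.

Lemma g_ge0 x : x \in xs -> 0 <= dz gZ x.
Proof. by move=> /Hxs [/ltW //|[k ->]]; rewrite dz_ray Hgm mul0rn. Qed.

Lemma a_ge0 x : x \in xs -> 0 <= dz aZ x.
Proof. by move=> xin; rewrite a_dec addr_ge0 ?mulrn_wge0 ?Hh ?g_ge0. Qed.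

Lemma a_eq0 x : x \in xs -> dz aZ x = 0 -> x = 0.
Proof.
move=> xin; case: (Hxs xin) => [gp|[k ->]].
  rewrite a_dec => /eqP; rewrite paddr_eq0 ?mulrn_wge0 ?Hh ?g_ge0 ?ltW //.
  move=> /andP [_ /eqP h]; rewrite -mulr_natl in h; move/eqP: h.
  by rewrite mulf_eq0 pnatr_eq0 (gt_eqF gp) orbF => /eqP c0; move: c_gt0; rewrite c0.
rewrite dz_ray am => /eqP; rewrite mulrn_eq0 oner_eq0 orbF => /eqP ->.
by rewrite mulr0n.
Qed.

Lemma pick_gt0 x : 0 < dz gZ (pickg gZ xstar x).
Proof. by rewrite /pickg; case: ifP. Qed.

Lemma cg_neq0 y : 0 < dz gZ y -> (c%:R * (dz gZ y)%:~R : R) != 0.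
Proof.
move=> gp; rewrite mulf_eq0 negb_or pnatr_eq0 -lt0n c_gt0 /=.
by rewrite intr_eq0 gt_eqF.
Qed.

Lemma intr_a y : ((dz aZ y)%:~R : R) = (dz hZ y)%:~R + c%:R * (dz gZ y)%:~R.
Proof. by rewrite a_dec rmorphD rmorphMn mulr_natl. Qed.

Lemma qv_fa y : 0 < dz gZ y -> fa (qv R m hZ gZ c y) = 1.
Proof.
move=> gp; rewrite /qv dotZr dotBr dotZr !dot_zR am intr_a mulr1 addrAC subrr add0r.
by rewrite mulVf // cg_neq0.
Qed.

Lemma qv_fh y : fh (qv R m hZ gZ c y) = 0.
Proof. by rewrite /qv dotZr dotBr dotZr !dot_zR Hhm mulr1 subrr mulr0. Qed.

Lemma qv_fg y : 0 < dz gZ y -> fg (qv R m hZ gZ c y) = (c%:R)^-1.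
Proof.
move=> gp; rewrite /qv dotZr dotBr dotZr !dot_zR Hgm mulr0 subr0.
rewrite invfM -mulrA mulVf ?mulr1 // intr_eq0 gt_eqF //.
Qed.

Lemma K1 x : x \in xs ->
  (c%:R * (dz gZ x)%:~R) *: qv R m hZ gZ c (pickg gZ xstar x)
  = zR R x - (dz hZ x)%:~R *: v.
Proof.
move=> xin; case: (Hxs xin) => [gp|[k ->]].
  by rewrite /pickg gp /qv scalerA mulfV ?scale1r // cg_neq0.
rewrite !dz_ray Hgm mul0rn mulr0 scale0r Hhm zRMn rmorphMn rmorph1.
by rewrite scaler_nat subrr.
Qed.

Definition GC (y : vec) := exists s : nat -> R, (forall i, 0 <= s i) /\
  y = \sum_(0 <= i < n) s i *: zR R xs`_i.

Lemma GC0 : GC 0.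
Proof. by exists (fun _ => 0); split => //; rewrite big1 // => i _; rewrite scale0r. Qed.

Lemma GCD y z : GC y -> GC z -> GC (y + z).
Proof.
case=> s [s0 ->] [t [t0 ->]]; exists (fun i => s i + t i); split.
  by move=> i; rewrite addr_ge0.
by rewrite -big_split; apply: eq_bigr => i _; rewrite scalerDl.
Qed.

Lemma GCZ (k : R) y : 0 <= k -> GC y -> GC (k *: y).
Proof.
move=> k0 [s [s0 ->]]; exists (fun i => k * s i); split.
  by move=> i; rewrite mulr_ge0.
by rewrite scaler_sumr; apply: eq_bigr => i _; rewrite scalerA.
Qed.

Lemma GC_sum (s : nat -> R) (Y : nat -> vec) k :
  (forall i, 0 <= s i) -> (forall i, (i < k)%N -> GC (Y i)) ->
  GC (\sum_(0 <= i < k) s i *: Y i).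
Proof.
move=> s0; elim: k => [|k IH] hY; first by rewrite big_nil; exact: GC0.
rewrite big_nat_recr //=; apply: GCD; first by apply: IH => i ik; apply: hY; exact: ltnW.
by apply: GCZ => //; apply: hY.
Qed.

Lemma GC_M z : M z -> GC (zR R z).
Proof.
case/Hgen=> cf ->; exists (o2n (fun i => (cf i)%:R)); split.
  by apply: o2n_ge0 => i; rewrite ler0n.
rewrite zR_sum -(o2n_sum (fun i : 'I_n => (cf i)%:R) (fun i => zR R xs`_i)).
by apply: eq_bigr => i _; rewrite zRMn scaler_nat.
Qed.

Lemma M_xs x : x \in xs -> M x.
Proof.
move=> xin; apply/Hgen; have lt: (index x xs < n)%N by rewrite index_mem.
exists (fun j => (j == Ordinal lt) : nat).
rewrite (bigD1 (Ordinal lt)) //= eqxx mulr1n nth_index // big1 ?addr0 //.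
by move=> j /negbTE ->; rewrite mulr0n.
Qed.

Lemma cone_GC (S : vec -> Prop) y : (forall z, S z -> GC z) -> cone S y -> GC y.
Proof.
move=> hS /cone_nat [s [l [hs [l0 ->]]]]; apply: GC_sum => // i lt.
by apply/hS/hs; rewrite mem_nth.
Qed.

Lemma GC_cone y : GC y -> cone (@imM R r M) y.
Proof.
case=> s [s0 ->]; apply/cone_nat; exists (map (@zR R r) xs), s; split.
  by move=> z /mapP [x xin ->]; exists x; split => //; apply: M_xs.
split => //; rewrite size_map; apply: eq_big_nat => i /andP [_ lt].
by rewrite (nth_map 0).
Qed.

Lemma coneE y : cone (@imM R r M) y <-> GC y.
Proof.
split; last exact: GC_cone.
by apply: cone_GC => z [x [Mx ->]]; apply: GC_M.
Qed.

Lemma PhiME y : PhiM M H y <-> GC y /\ fa y = 1.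
Proof. by rewrite /PhiM coneE H_E. Qed.

Lemma form_sum (L : vec) (s : nat -> R) (Y : nat -> vec) k :
  dot L (\sum_(0 <= i < k) s i *: Y i) = \sum_(0 <= i < k) s i * dot L (Y i).
Proof. by rewrite dot_sumr; apply: eq_bigr => i _; rewrite dotZr. Qed.


Lemma nth_ge0 (f : 'rV[int]_r -> int) i :
  (forall x, x \in xs -> 0 <= f x) -> f 0 = 0 -> 0 <= f xs`_i.
Proof.
move=> h f0; case: (ltnP i n) => [lt|ge]; first by apply: h; rewrite mem_nth.
by rewrite nth_default // f0.
Qed.

Lemma g_nth i : 0 <= dz gZ xs`_i.
Proof. by apply: nth_ge0; [exact: g_ge0 | rewrite dzC /dz big1 // => j _; rewrite mxE mul0r]. Qed.
Lemma h_nth i : 0 <= dz hZ xs`_i.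
Proof. by apply: nth_ge0; [exact: Hh | rewrite dzC /dz big1 // => j _; rewrite mxE mul0r]. Qed.

Lemma pick_nth i : pickg gZ xstar xs`_i \in xs.
Proof.
rewrite /pickg; case: ifP => // gp; case: (ltnP i n) => [lt|ge].
  by rewrite mem_nth.
by move: gp; rewrite nth_default // dzC /dz big1 ?ltxx // => j _; rewrite mxE mul0r.
Qed.

Lemma K1n i : (c%:R * (dz gZ xs`_i)%:~R) *: Q i = zR R xs`_i - (dz hZ xs`_i)%:~R *: v.
Proof.
case: (ltnP i n) => [lt|ge]; first by apply: K1; rewrite mem_nth.
rewrite nth_default // zR0 dzC /dz big1; last by move=> j _; rewrite mxE mul0r.
rewrite big1; last by move=> j _; rewrite mxE ?mulr0 ?mul0r.
by rewrite mulr0 !scale0r subrr.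
Qed.

Lemma nthQ i : (i < n)%N -> (map (@qR R r) base)`_i = Q i.
Proof. by move=> lt; rewrite (nth_map 0) ?size_map // (nth_map 0) // qR_qq. Qed.

Lemma D_nat y : D y <-> exists l0 (w : nat -> R), 0 <= l0 /\ (forall i, 0 <= w i) /\
  l0 + \sum_(0 <= i < n) w i = 1 /\ y = l0 *: v + \sum_(0 <= i < n) w i *: Q i.
Proof.
rewrite /pyramid pyr_nat !size_map.
have E (w : nat -> R) : \sum_(0 <= i < n) w i *: (map (@qR R r) base)`_i
    = \sum_(0 <= i < n) w i *: Q i.
  by apply: eq_big_nat => i /andP [_ lt]; rewrite nthQ.
split; case=> l0 [w [h1 [h2 [h3 h4]]]]; exists l0, w; do 3! split => //.
  by rewrite h4 E.
by rewrite h4 E.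
Qed.

Lemma F_nat y : F y <-> exists w : nat -> R, (forall i, 0 <= w i) /\
  \sum_(0 <= i < n) w i = 1 /\ y = \sum_(0 <= i < n) w i *: Q i.
Proof.
rewrite /facet_opp conv_nat !size_map.
have E (w : nat -> R) : \sum_(0 <= i < n) w i *: (map (@qR R r) base)`_i
    = \sum_(0 <= i < n) w i *: Q i.
  by apply: eq_big_nat => i /andP [_ lt]; rewrite nthQ.
split; case=> w [h2 [h3 h4]]; exists w; do 2! split => //.
  by rewrite h4 E.
by rewrite h4 E.
Qed.

Lemma Q_fa i : fa (Q i) = 1.
Proof. exact/qv_fa/pick_gt0. Qed.
Lemma Q_fh i : fh (Q i) = 0.
Proof. exact: qv_fh. Qed.
Lemma Q_fg i : fg (Q i) = (c%:R)^-1.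
Proof. exact/qv_fg/pick_gt0. Qed.

Lemma sumQ_fa (w : nat -> R) : fa (\sum_(0 <= i < n) w i *: Q i) = \sum_(0 <= i < n) w i.
Proof. by rewrite form_sum; apply: eq_bigr => i _; rewrite Q_fa mulr1. Qed.
Lemma sumQ_fh (w : nat -> R) : fh (\sum_(0 <= i < n) w i *: Q i) = 0.
Proof. by rewrite form_sum big1 // => i _; rewrite Q_fh mulr0. Qed.
Lemma sumQ_fg (w : nat -> R) :
  fg (\sum_(0 <= i < n) w i *: Q i) = (\sum_(0 <= i < n) w i) / c%:R.
Proof. by rewrite form_sum mulr_suml; apply: eq_bigr => i _; rewrite Q_fg. Qed.

Lemma comb_fa l0 (w : nat -> R) :
  fa (l0 *: v + \sum_(0 <= i < n) w i *: Q i) = l0 + \sum_(0 <= i < n) w i.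
Proof. by rewrite dotDr dotZr fa_v mulr1 sumQ_fa. Qed.
Lemma comb_fh l0 (w : nat -> R) :
  fh (l0 *: v + \sum_(0 <= i < n) w i *: Q i) = l0.
Proof. by rewrite dotDr dotZr fh_v mulr1 sumQ_fh addr0. Qed.
Lemma comb_fg l0 (w : nat -> R) :
  fg (l0 *: v + \sum_(0 <= i < n) w i *: Q i) = (\sum_(0 <= i < n) w i) / c%:R.
Proof. by rewrite dotDr dotZr fg_v mulr0 sumQ_fg add0r. Qed.

Lemma PhiM_D y : PhiM M H y -> D y.
Proof.
case/PhiME=> [[s [s0 ey]] fy]; apply/D_nat.
exists (\sum_(0 <= i < n) s i * (dz hZ xs`_i)%:~R).
exists (fun i => s i * (c%:R * (dz gZ xs`_i)%:~R)).
split; first by apply: psum_nat_ge0 => i; rewrite mulr_ge0 // ler0z h_nth.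
split; first by move=> i; rewrite !mulr_ge0 // ?ler0z ?g_nth.
split.
  transitivity (fa y); last exact: fy.
  rewrite ey form_sum -big_split; apply: eq_bigr => i _.
  by rewrite dot_zR intr_a mulrDr.
rewrite ey scaler_suml -big_split; apply: eq_bigr => i _ /=.
by rewrite -scalerA K1n scalerBr scalerA addrC subrK.
Qed.

Lemma D_v : D v.
Proof.
apply/D_nat; exists 1, (fun _ => 0); split => //; split => //.
by rewrite !big1 ?addr0 ?scale1r // => i _; rewrite scale0r.
Qed.

Lemma D_fh_lt y : D y -> y <> v -> fh y < 1.
Proof.
case/D_nat=> l0 [w [l00 [w0 [ws ey]]]] neq; rewrite ey comb_fh.
rewrite lt_neqAle; apply/andP; split; last by rewrite -ws lerDl psum_nat_ge0.
apply/eqP => l01; apply: neq.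
have sw : \sum_(0 <= i < n) w i = 0 by apply: (addrI l0); rewrite addr0 ws l01.
rewrite ey l01 scale1r big_nat_cond big1 ?addr0 // => i /andP [/andP [_ lt] _].
by rewrite (psum_nat_eq0 w0 sw lt) scale0r.
Qed.

Lemma D_vertex : vertex D v.
Proof.
split; first exact: D_v.
by exists (zR R hZ) => y Dy neq; rewrite fh_v; apply: D_fh_lt.
Qed.

Lemma D_H y : D y -> fa y = 1.
Proof. by case/D_nat=> l0 [w [_ [_ [ws ->]]]]; rewrite comb_fa. Qed.

Lemma D_fg y : D y -> fg y = (1 - fh y) / c%:R.
Proof.
case/D_nat=> l0 [w [_ [_ [ws ->]]]]; rewrite comb_fg comb_fh.
by rewrite -ws addrC addrK.
Qed.

Lemma PhiM_v : PhiM M H v.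
Proof. by apply/PhiME; split; [exact: GC_M | exact: fa_v]. Qed.

Lemma PhiM_vertex : vertex (PhiM M H) v.
Proof.
split; first exact: PhiM_v.
exists (- zR R gZ) => y Py neq; rewrite !dotNl fg_v oppr0 oppr_lt0.
have Dy := PhiM_D Py; rewrite D_fg // divr_gt0 ?ltr0n // subr_gt0.
exact: D_fh_lt.
Qed.


Lemma a_pick_gt0 i : 0 < dz aZ (pickg gZ xstar xs`_i).
Proof.
rewrite a_dec; apply: ltr_wpDl; first by apply: Hh; exact: pick_nth.
by rewrite pmulrn_lgt0 // pick_gt0.
Qed.

Lemma Phi_PhiM p : p \in xs -> 0 < dz aZ p ->
  PhiM M H (((dz aZ p)%:~R)^-1 *: zR R p).
Proof.
move=> pin ap; apply/PhiME; split.
  by apply: GCZ; [rewrite invr_ge0 ler0z ltW | apply/GC_M/M_xs].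
by rewrite dotZr dot_zR mulVf // intr_eq0 gt_eqF.
Qed.

Lemma Q_Phi y : y \in xs -> 0 < dz gZ y ->
  qv R m hZ gZ c y - v = ((dz aZ y)%:~R / (c%:R * (dz gZ y)%:~R)) *:
     (((dz aZ y)%:~R)^-1 *: zR R y - v).
Proof.
move=> yin gp; have Gnz := cg_neq0 gp.
have Anz : ((dz aZ y)%:~R : R) != 0.
  by rewrite intr_eq0 a_dec gt_eqF // ltr_wpDl ?Hh ?pmulrn_lgt0.
rewrite /qv scalerBr !scalerA [RHS]scalerBr scalerA.
rewrite mulrAC mulfV // mul1r -addrA -opprD; congr (_ - _).
rewrite -{2}[zR R m]scale1r -scalerDl; congr (_ *: _).
by rewrite intr_a mulrDl divff // mulrC.
Qed.


Lemma corner_eq : set_eq (corner (PhiM M H) v) (corner D v).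
Proof.
move=> x; split.
  case=> t [y [t0 [Py ->]]]; exists t, y; split => //; split => //.
  exact: PhiM_D.
case=> t [y [t0 [Dy ->]]].
case/D_nat: Dy => l0 [w [l00 [w0 [ws ey]]]].
pose p i := pickg gZ xstar xs`_i.
pose A i : R := (dz aZ (p i))%:~R.
pose G i : R := c%:R * (dz gZ (p i))%:~R.
pose mu i := w i * (A i / G i).
pose Ph i := (A i)^-1 *: zR R (p i).
have Ap i : 0 < A i by rewrite ltr0z a_pick_gt0.
have Gp i : 0 < G i by rewrite mulr_gt0 ?ltr0n ?ltr0z ?pick_gt0.
have mu0 i : 0 <= mu i by rewrite mulr_ge0 // divr_ge0 // ltW.
have eyv : y - v = \sum_(0 <= i < n) mu i *: (Ph i - v).
  have -> : y - v = \sum_(0 <= i < n) w i *: (Q i - v).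
    rewrite ey (eq_bigr _ (fun i _ => scalerBr _ _ _)) sumrB -scaler_suml.
    have l0E : l0 = 1 - \sum_(0 <= i < n) w i by rewrite -ws addrK.
    rewrite l0E scalerBl scale1r.
    by rewrite addrAC (addrAC (zR R m)) subrr add0r addrC.
  apply: eq_bigr => i _; rewrite Q_Phi ?pick_nth ?pick_gt0 //.
  by rewrite scalerA.
have PPh i : PhiM M H (Ph i) by apply: Phi_PhiM; [exact: pick_nth | exact: a_pick_gt0].
set S := \sum_(0 <= i < n) mu i.
have S0 : 0 <= S by apply: psum_nat_ge0.
case: (eqVneq S 0) => [S0'|Snz].
  exists 0, (zR R m); split => //; split; first exact: PhiM_v.
  rewrite subrr scaler0 eyv big_nat_cond big1 ?scaler0 // => i.
  by case/andP => /andP [_ lt] _; rewrite (psum_nat_eq0 mu0 S0' lt) scale0r.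
have Sp : 0 < S by rewrite lt_neqAle eq_sym Snz.
exists (t * S), (S^-1 *: \sum_(0 <= i < n) mu i *: Ph i); split.
  by rewrite mulr_ge0.
split.
  apply/PhiME; split.
    apply: GCZ; first by rewrite invr_ge0.
    by apply: GC_sum => // i _; case/PhiME: (PPh i).
  rewrite dotZr form_sum.
  have -> : \sum_(0 <= i < n) mu i * fa (Ph i) = S.
    by apply: eq_bigr => i _; case/PhiME: (PPh i) => _ ->; rewrite mulr1.
  by rewrite mulVf.
rewrite eyv -scalerA scalerBr scalerA mulfV // scale1r.
by rewrite (eq_bigr _ (fun i _ => scalerBr _ _ _)) sumrB -scaler_suml.
Qed.

Lemma rat_pyr : rational_pyramid H v base.
Proof.
split; first by apply/H_E; exact: fa_v.
split.
  move=> q /mapP [x xin ->]; apply/H_E; rewrite qR_qq; exact/qv_fa/pick_gt0.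
case=> t [ts ev].
have : fh v = 0.
  rewrite ev dot_sumr big1 // => i _; rewrite dotZr.
  have : (map (@qR R r) base)`_i \in map (@qR R r) base by rewrite mem_nth.
  by case/mapP => q /mapP [x xin ->] ->; rewrite qR_qq qv_fh mulr0.
by rewrite fh_v => /eqP; rewrite oner_eq0.
Qed.

Lemma a_nth i : 0 <= dz aZ xs`_i.
Proof. by apply: nth_ge0; [exact: a_ge0 | rewrite dzC /dz big1 // => j _; rewrite mxE mul0r]. Qed.

Lemma good : @good_hyperplane R r M (iQ aZ) 1.
Proof.
split.
  apply/eqP => a0.
  have e : zR R aZ = 0.
    by rewrite -qR_iQ a0; apply/rowP => i; rewrite !mxE rmorph0.
  by move: fa_v; rewrite e dot0l => /eqP; rewrite eq_sym oner_eq0.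
split; first exact: oner_neq0.
move=> x; split.
- move/coneE => [s [s0 ->]].
  pose phi x := if 0 < dz aZ x then ((dz aZ x)%:~R)^-1 *: zR R x else zR R m.
  apply/cone_nat; exists (map phi xs), (fun i => s i * (dz aZ xs`_i)%:~R).
  split.
    move=> y /mapP [x' xin ->]; rewrite /phi; case: ifP => ap.
      exact: Phi_PhiM.
    exact: PhiM_v.
  split; first by move=> i; rewrite mulr_ge0 // ler0z a_nth.
  rewrite size_map; apply: eq_big_nat => i /andP [_ lt]; rewrite (nth_map 0) //.
  have xin := mem_nth 0 lt; rewrite /phi; case: ifP => ap.
    by rewrite scalerA -mulrA mulfV ?mulr1 // intr_eq0 gt_eqF.
  have a0 : dz aZ xs`_i = 0.
    by apply/eqP; rewrite eq_le a_ge0 // andbT leNgt ap.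
  by rewrite a0 mulr0 scale0r (a_eq0 xin a0) zR0 scaler0.
- move=> Cx; apply/coneE; apply: cone_GC Cx => y /PhiME [].
  by [].
Qed.

Lemma pt : Phi_pt H m v.
Proof.
move=> y; split.
  case=> [[t [t0 ->]] /H_E]; rewrite dotZr fa_v mulr1 => ->.
  by rewrite scale1r.
move=> ->; split; first by exists 1; rewrite scale1r.
by apply/H_E; exact: fa_v.
Qed.


Definition CN (u : vec) := exists l0 (w : nat -> R), 0 <= l0 /\ (forall i, 0 <= w i) /\
  u = l0 *: v + \sum_(0 <= i < n) w i *: Q i.
Definition FN (u : vec) := exists w : nat -> R, (forall i, 0 <= w i) /\
  u = \sum_(0 <= i < n) w i *: Q i.

Lemma CN_D u : CN u -> 0 < fa u -> D ((fa u)^-1 *: u).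
Proof.
case=> l0 [w [l00 [w0 eu]]] fp; set k := fa u.
have ek : k = l0 + \sum_(0 <= i < n) w i by rewrite /k eu comb_fa.
apply/D_nat; exists (k^-1 * l0), (fun i => k^-1 * w i).
split; first by rewrite mulr_ge0 // invr_ge0 ltW.
split; first by move=> i; rewrite mulr_ge0 // invr_ge0 ltW.
split; first by rewrite -mulr_sumr -mulrDr -ek mulVf // gt_eqF.
rewrite eu scalerDr scalerA scaler_sumr; congr (_ + _).
by apply: eq_bigr => i _; rewrite scalerA.
Qed.

Lemma FN_F u : FN u -> 0 < fa u -> F ((fa u)^-1 *: u).
Proof.
case=> w [w0 eu] fp; set k := fa u.
have ek : k = \sum_(0 <= i < n) w i by rewrite /k eu sumQ_fa.
apply/F_nat; exists (fun i => k^-1 * w i).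
split; first by move=> i; rewrite mulr_ge0 // invr_ge0 ltW.
split; first by rewrite -mulr_sumr -ek mulVf // gt_eqF.
by rewrite eu scaler_sumr; apply: eq_bigr => i _; rewrite scalerA.
Qed.

Lemma FN_pos u : FN u -> u <> 0 -> 0 < fa u.
Proof.
case=> w [w0 eu] nz; rewrite eu sumQ_fa lt_neqAle psum_nat_ge0 // andbT.
apply/eqP => /esym S0; apply: nz; rewrite eu big_nat_cond big1 // => i.
by case/andP => /andP [_ lt] _; rewrite (psum_nat_eq0 w0 S0 lt) scale0r.
Qed.

Lemma CN_add u1 u2 : CN u1 -> CN u2 -> CN (u1 + u2).
Proof.
case=> a [w [a0 [w0 ->]]] [b [w' [b0 [w0' ->]]]].
exists (a + b), (fun i => w i + w' i); split; first by rewrite addr_ge0.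
split; first by move=> i; rewrite addr_ge0.
rewrite scalerDl (eq_bigr _ (fun i _ => scalerDl _ _ _)) big_split /=.
by rewrite -!addrA; congr (_ + _); rewrite addrCA.
Qed.

Lemma MP_D (z : 'rV[int]_r) :
  MP H D z <-> exists (k : nat) w, MP H F w /\ z = m *+ k + w.
Proof.
split.
- case=> [->|[nz [y [[t [t0 ey]] [Hy Dy]]]]].
    by exists 0%N, 0; split; [left | rewrite mulr0n addr0].
  move/H_E: Hy => fy.
  have tp : 0 < t.
    rewrite lt_neqAle t0 andbT; apply/eqP => t0'.
    by move: fy; rewrite ey -t0' scale0r dot0r => /eqP; rewrite eq_sym oner_eq0.
  case/D_nat: Dy => l0 [w [l00 [w0 [ws eyD]]]].
  have ezy : zR R z = t^-1 *: y by rewrite ey scalerA mulVf ?gt_eqF // scale1r.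
  have fhz : ((dz hZ z)%:~R : R) = t^-1 * l0.
    by rewrite -dot_zR ezy dotZr eyD comb_fh.
  have hz0 : 0 <= dz hZ z.
    have : (0 : R) <= (dz hZ z)%:~R by rewrite fhz mulr_ge0 // invr_ge0 ltW.
    by rewrite ler0z.
  set k := `|dz hZ z|%N.
  have hk : ((dz hZ z)%:~R : R) = k%:R by rewrite -[dz hZ z]gez0_abs.
  exists k, (z - m *+ k).
  split; last by rewrite addrC subrK.
  have ew : zR R (z - m *+ k) = t^-1 *: \sum_(0 <= i < n) w i *: Q i.
    rewrite zRB zRMn ezy eyD scalerDr scalerA -fhz hk scaler_nat.
    by rewrite addrAC subrr add0r.
  case: (eqVneq (z - m *+ k) 0) => [->|wnz]; first by left.
  right; split; first by apply/eqP.
  have FNw : FN (zR R (z - m *+ k)).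
    rewrite ew; exists (fun i => t^-1 * w i).
    split; first by move=> i; rewrite mulr_ge0 // invr_ge0 ltW.
    by rewrite scaler_sumr; apply: eq_bigr => i _; rewrite scalerA.
  have fp : 0 < fa (zR R (z - m *+ k)).
    apply: (FN_pos FNw) => e; move/eqP: wnz; apply.
    by apply: (@zR_inj R); rewrite e zR0.
  exists ((fa (zR R (z - m *+ k)))^-1 *: zR R (z - m *+ k)); split.
    by exists ((fa (zR R (z - m *+ k)))^-1); split => //; rewrite invr_ge0 ltW.
  split; last exact: FN_F.
  by apply/H_E; rewrite dotZr mulVf // gt_eqF.
- case=> k [w [Hw ->]].
  case: (eqVneq (m *+ k + w) 0) => [->|nz]; first by left.
  right; split; first by apply/eqP.
  suff [CNu fp] : CN (zR R (m *+ k + w)) /\ 0 < fa (zR R (m *+ k + w)).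
    exists ((fa (zR R (m *+ k + w)))^-1 *: zR R (m *+ k + w)); split.
      by exists (fa (zR R (m *+ k + w)))^-1; split => //; rewrite invr_ge0 ltW.
    split; last exact: CN_D.
    by apply/H_E; rewrite dotZr mulVf // gt_eqF.
  have CNk : CN (zR R (m *+ k)).
    exists k%:R, (fun _ => 0); split; first by rewrite ler0n.
    split => //; rewrite big1 ?addr0 ?zRMn ?scaler_nat // => i _.
    by rewrite scale0r.
  have fak : fa (zR R (m *+ k)) = k%:R by rewrite zRMn -scaler_nat dotZr fa_v mulr1.
  case: Hw => [w0|[wnz [yw [[t [t0 eyw]] [Hyw Fyw]]]]].
    subst w; rewrite addr0 in nz *; split => //.
    rewrite fak ltr0n lt0n; apply: contraNneq nz => ->.
    by rewrite mulr0n.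
  move/H_E: Hyw => fyw.
  have tp : 0 < t.
    rewrite lt_neqAle t0 andbT; apply/eqP => t0'.
    by move: fyw; rewrite eyw -t0' scale0r dot0r => /eqP; rewrite eq_sym oner_eq0.
  have ezw : zR R w = t^-1 *: yw by rewrite eyw scalerA mulVf ?gt_eqF // scale1r.
  case/F_nat: Fyw => mu [mu0 [mus emu]].
  rewrite zRD; split.
    apply: CN_add => //; exists 0, (fun i => t^-1 * mu i); split => //.
    split; first by move=> i; rewrite mulr_ge0 // invr_ge0 ltW.
    rewrite scale0r add0r ezw emu scaler_sumr.
    by apply: eq_bigr => i _; rewrite scalerA.
  rewrite dotDr fak ezw dotZr fyw mulr1.
  by apply: ltr_wpDl; [rewrite ler0n | rewrite invr_gt0].
Qed.

Lemma F_fh y : F y -> fh y = 0.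
Proof. by case/F_nat=> w [_ [_ ->]]; rewrite sumQ_fh. Qed.

Lemma F_not_PhiM :
  (forall x, x \in xs -> dz aZ x <= dz hZ x *+ 2) ->
  forall y, F y -> ~ PhiM M H y.
Proof.
move=> Ha2 y Fy /PhiME [[s [s0 ey]] fy].
have : fa y <= 2 * fh y.
  rewrite ey !form_sum mulr_sumr; apply: ler_sum => i _.
  rewrite mulrCA ler_wpM2l // !dot_zR mulr_natl -rmorphMn ler_int.
  case: (ltnP i n) => [lt|ge]; first by apply: Ha2; rewrite mem_nth.
  by rewrite nth_default // !(dzC _ 0) /dz !big1 // => j _; rewrite mxE mul0r.
by rewrite fy (F_fh Fy) mulr0 ler10.
Qed.


Hypothesis Hgp : forall z : 'rV[int]_r, exists x y, M x /\ M y /\ z = x - y.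

Lemma PhiM_lower : aff_indep_in (PhiM M H) r.-1.
Proof.
pose phi x := if 0 < dz aZ x then ((dz aZ x)%:~R)^-1 *: zR R x else v.
have Pphi x : x \in xs -> PhiM M H (phi x).
  by move=> xin; rewrite /phi; case: ifP => ap; [exact: Phi_PhiM | exact: PhiM_v].
pose X := [seq phi x - v | x <- xs].
have inM z : M z -> zR R z \in <<map (@zR R r) xs>>%VS.
  case/Hgen => cf ->; rewrite zR_sum; apply: memv_suml => i _; rewrite zRMn.
  by apply: rpredMn; apply: memv_span; apply: map_f; apply: mem_nth.
have s1 : (fullv <= <<map (@zR R r) xs>>)%VS.
  apply/subvP => w _; rewrite [w]row_sum_delta; apply: memv_suml => k _.
  apply: memvZ; have [x [y [Mx [My e]]]] := Hgp (delta_mx 0 k).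
  have -> : delta_mx 0 k = zR R (delta_mx 0 k).
    by apply/rowP => j; rewrite !mxE rmorph_nat.
  by rewrite e zRB; apply: rpredB; apply: inM.
have s2 : (<<map (@zR R r) xs>> <= <<X>> + <[v]>)%VS.
  apply/span_subvP => w /mapP [x xin ->].
  case: (boolP (0 < dz aZ x)) => ap.
    have -> : zR R x = (dz aZ x)%:~R *: (phi x - v) + (dz aZ x)%:~R *: v.
      rewrite /phi ap scalerBr scalerA mulfV ?scale1r ?subrK //.
      by rewrite intr_eq0 gt_eqF.
    apply: memv_add; last by apply: memvZ; exact: memv_line.
    by apply: memvZ; apply: memv_span; apply: map_f.
  have a0 : dz aZ x = 0 by apply/eqP; rewrite eq_le a_ge0 // andbT leNgt.
  by rewrite (a_eq0 xin a0) zR0 mem0v.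
have dX : (r <= \dim <<X>> + 1)%N.
  have := dimvS (subv_trans s1 s2); rewrite dimvf dim_matrix mul1r => h.
  apply: (leq_trans h); have := dimv_sum_cap <<X>>%VS <[v]>%VS => e.
  apply: (@leq_trans (\dim <<X>> + \dim <[v]>)%N).
    by rewrite -e leq_addr.
  by rewrite leq_add2l dim_vline leq_b1.
have [Y [sY [fY dY]]] := free_sub X.
have szY : (r.-1 <= size Y)%N.
  have := dimvS dY; move: (fY); rewrite /free => /eqP -> h.
  by apply: leq_trans h; rewrite -subn1 leq_subLR addnC.
exists v, [seq y + v | y <- take r.-1 Y]; split; first exact: PhiM_v.
split.
  move=> p /mapP [y /mem_take /sY /mapP [x xin ->] ->]; rewrite subrK.
  exact: Pphi.
split; first by rewrite size_map size_takel.
rewrite -map_comp (eq_map (g := id)); last by move=> y /=; rewrite addrK.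
rewrite map_id; move: fY; rewrite -{1}(cat_take_drop r.-1 Y); exact: catl_free.
Qed.

Lemma has_dim_PhiM : (0 < r)%N -> has_dim (PhiM M H) r.-1.
Proof.
move=> r0; split; first exact: PhiM_lower.
rewrite prednK //; apply: (@no_aff _ _ (zR R aZ) v).
  by rewrite fa_v oner_neq0.
by move=> y /PhiME [].
Qed.

Lemma has_dim_D : (0 < r)%N -> has_dim D r.-1.
Proof.
move=> r0; split; first by apply: aff_mono PhiM_lower; exact: PhiM_D.
rewrite prednK //; apply: (@no_aff _ _ (zR R aZ) v).
  by rewrite fa_v oner_neq0.
exact: D_H.
Qed.

Lemma tangent_D : (0 < r)%N -> tangent (PhiM M H) D v.
Proof.
move=> r0; split; first exact: PhiM_D.
split; first exact: PhiM_vertex.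
split; first exact: D_vertex.
split; first by exists r.-1; split; [exact: has_dim_PhiM | exact: has_dim_D].
exact: corner_eq.
Qed.


Lemma all_facts : (0 < r)%N ->
  @good_hyperplane R r M (iQ aZ) 1 /\ Phi_pt H m v /\ rational_pyramid H v base /\
  @Defs.subset R r (PhiM M H) D /\ tangent (PhiM M H) D v /\
  (forall z, MP H D z <-> exists (k : nat) w, MP H F w /\ z = m *+ k + w) /\
  ((forall x, x \in xs -> dz aZ x <= dz hZ x *+ 2) -> forall y, F y -> ~ PhiM M H y).
Proof.
move=> r0; split; first exact: good.
split; first exact: pt.
split; first exact: rat_pyr.
split; first by move=> y; apply: PhiM_D.
split; first exact: tangent_D.
split; first exact: MP_D.
exact: F_not_PhiM.
Qed.

End Gen.

Section Top.
Variables (R : realType) (r : nat).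

Lemma qv12 (m h1 gZ y : 'rV[int]_r) : 0 < dz gZ y -> dz gZ m = 0 ->
  qv R m h1 gZ 2 y = 2^-1 *: zR R m + 2^-1 *: qv R m (h1 + gZ) gZ 1 y.
Proof.
move=> gp gm; set G : R := (dz gZ y)%:~R.
have Gnz : G != 0 by rewrite intr_eq0 gt_eqF.
have nz : (2 * G) != 0 by rewrite mulf_neq0 // pnatr_eq0.
have e1 : 2 * G * 2^-1 = G by rewrite mulrAC mulfV ?mul1r // pnatr_eq0.
have e2 : 2 * G * (2^-1 / G) = 1 by rewrite mulrA e1 mulfV.
apply: (scalerI nz); rewrite /qv -/G !scalerA mulfV // scale1r mul1r.
rewrite scalerDr !scalerA e1 e2 scale1r dzDl rmorphD /= -/G scalerDl opprD.
by rewrite [RHS]addrC -[RHS]addrA subrK.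
Qed.

Lemma D12 (M : 'rV[int]_r -> Prop) (xs : seq 'rV[int]_r) (m h1 gZ xstar : 'rV[int]_r) :
  dz gZ m = 0 -> 0 < dz gZ xstar ->
  forall y, pyramid (zR R m) (baseL m h1 gZ 2 xstar xs) y ->
            pyramid (zR R m) (baseL m (h1 + gZ) gZ 1 xstar xs) y.
Proof.
move=> gm gs y; rewrite /pyramid !pyr_nat !size_map.
case=> l0 [w [l00 [w0 [ws ey]]]].
exists (l0 + 2^-1 * \sum_(0 <= i < size xs) w i), (fun i => 2^-1 * w i).
split; first by rewrite addr_ge0 // mulr_ge0 // ?invr_ge0 ?ler0n // psum_nat_ge0.
split; first by move=> i; rewrite mulr_ge0 // invr_ge0 ler0n.
split.
  have h2 : (2^-1 + 2^-1 : R) = 1.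
    by lra.
  by rewrite -mulr_sumr -addrA -mulrDl h2 mul1r.
rewrite ey scalerDl -addrA; congr (_ + _).
have pk i : 0 < dz gZ (pickg gZ xstar xs`_i).
  by rewrite /pickg; case: ifP.
rewrite [in RHS](eq_big_nat _ _ (F2 := fun i => 2^-1 * w i *: qv R m (h1 + gZ) gZ 1 (pickg gZ xstar xs`_i))); last first.
  by move=> i /andP [_ lt]; rewrite (nth_map 0) ?size_map // (nth_map 0) // qR_qq.
rewrite (eq_big_nat _ _ (F2 := fun i => w i *: qv R m h1 gZ 2 (pickg gZ xstar xs`_i))); last first.
  by move=> i /andP [_ lt]; rewrite (nth_map 0) ?size_map // (nth_map 0) // qR_qq.
rewrite mulr_sumr scaler_suml -big_split; apply: eq_bigr => i _ /=.
by rewrite qv12 // scalerDr !scalerA [w i * _]mulrC.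
Qed.


Lemma exG (M : 'rV[int]_r -> Prop) (xs : seq 'rV[int]_r) (m : 'rV[int]_r)
  (a0 : 'rV[rat]_r) (b0 : rat) (v0 l : 'rV[R]_r) :
  (forall z, M z <-> exists cf : 'I_(size xs) -> nat,
      z = \sum_(i < size xs) xs`_i *+ cf i) ->
  b0 != 0 ->
  set_eq (cone (@imM R r M)) (cone (PhiM M (@hyperplane R r a0 b0))) ->
  Phi_pt (@hyperplane R r a0 b0) m v0 ->
  (forall y, PhiM M (@hyperplane R r a0 b0) y -> y <> v0 -> dot l y < dot l v0) ->
  (forall z, M z -> (ray (zR R m) (zR R z) <-> exists k : nat, z = m *+ k)) ->
  exists Gv : 'rV[R]_r, dot Gv (zR R m) = 0 /\
    forall x, x \in xs -> 0 < dot Gv (zR R x) \/ exists k : nat, x = m *+ k.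
Proof.
move=> Hgen b0nz Hc Hpt Hl Hray.
have [[t [t0 ev0]] Hv0] : ray (zR R m) v0 /\ @hyperplane R r a0 b0 v0 by apply/Hpt.
set B : R := ratr b0.
have Bnz : B != 0 by rewrite fmorph_eq0.
have HvB : dot (qR R a0) v0 = B := Hv0.
have tnz : t != 0.
  apply/eqP => t0'; move/eqP: Bnz; apply.
  by rewrite -HvB ev0 t0' scale0r dot0r.
pose Gv := (dot l v0 / B) *: qR R a0 - l.
have GH y : @hyperplane R r a0 b0 y -> dot Gv y = dot l v0 - dot l y.
  by move=> Hy; rewrite /Gv dotBl dotZl; move: Hy; rewrite /hyperplane -/B => ->; rewrite divfK.
have Gv0 : dot Gv v0 = 0 by rewrite GH // subrr.
exists Gv; split.
  have : dot Gv v0 = t * dot Gv (zR R m) by rewrite ev0 dotZr.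
  by rewrite Gv0 => /esym /eqP; rewrite mulf_eq0 (negbTE tnz) => /eqP.
move=> x xin.
have Mx := M_xs Hgen xin.
have : cone (PhiM M (@hyperplane R r a0 b0)) (zR R x).
  apply/Hc; exists [:: zR R x], (fun _ => 1); split.
    by move=> y; rewrite inE => /eqP ->; exists x.
  by split => //; rewrite big_ord1 scale1r.
case/cone_nat => s [w [hs [w0 ex]]].
have Gs i : 0 <= w i * dot Gv s`_i.
  case: (ltnP i (size s)) => [lt|ge]; last by rewrite nth_default // dot0r mulr0.
  have Ps := hs _ (mem_nth 0 lt); apply: mulr_ge0; first exact: w0.
  rewrite GH; last by case: Ps.
  rewrite subr_ge0; case: (eqVneq s`_i v0) => [->//|/eqP ne]; exact: ltW (Hl _ Ps ne).
have Gx : dot Gv (zR R x) = \sum_(0 <= i < size s) w i * dot Gv s`_i.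
  by rewrite ex dot_sumr; apply: eq_bigr => i _; rewrite dotZr.
case: (eqVneq (dot Gv (zR R x)) 0) => [G0|Gnz].
  right; apply/(Hray x Mx).
  have e i : (i < size s)%N -> w i *: s`_i = w i *: v0.
    move=> lt; have := psum_nat_eq0 Gs (etrans (esym Gx) G0) lt.
    move/eqP; rewrite mulf_eq0 => /orP [/eqP ->|/eqP Gsi]; first by rewrite !scale0r.
    case: (eqVneq s`_i v0) => [->//|/eqP ne].
    have Ps := hs _ (mem_nth 0 lt).
    have := Hl _ Ps ne; move: Gsi; rewrite GH; last by case: Ps.
    by move/eqP; rewrite subr_eq0 => /eqP ->; rewrite ltxx.
  exists ((\sum_(0 <= i < size s) w i) * t); split.
    by rewrite mulr_ge0 // psum_nat_ge0.
  rewrite ex (eq_big_nat _ _ (F2 := fun i => w i *: v0)); last first.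
    by move=> i /andP [_ lt]; apply: e.
  by rewrite -scaler_suml ev0 scalerA.
left; rewrite lt_neqAle eq_sym Gnz Gx /=.
by rewrite big_nat_cond sumr_ge0 // => i _.
Qed.


Lemma leq_sum_mem (T : eqType) (s : seq T) (F : T -> nat) x :
  x \in s -> (F x <= \sum_(y <- s) F y)%N.
Proof.
elim: s => //= y s IH; rewrite inE big_cons => /orP [/eqP ->|/IH h].
  exact: leq_addr.
exact: leq_trans h (leq_addl _ _).
Qed.

Definition n1 (X : 'rV[R]_r) : R := \sum_k `|X 0 k|.

Lemma n1_ge0 X : 0 <= n1 X.
Proof. by apply: sumr_ge0 => i _. Qed.

Lemma dot_bound (D X : 'rV[R]_r) : (forall k, `|D 0 k| <= 1) -> `|dot D X| <= n1 X.
Proof.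
move=> hD; rewrite /dot /n1; apply: le_trans (ler_norm_sum _ _ _) _.
by apply: ler_sum => k _; rewrite normrM ler_piMl.
Qed.

Lemma dzmm_gt0 (m : 'rV[int]_r) : m != 0 -> 0 < dz m m.
Proof.
move=> mnz; have hge : forall i : 'I_r, true -> 0 <= m 0 i * m 0 i.
  by move=> i _; rewrite -expr2 sqr_ge0.
rewrite lt_neqAle sumr_ge0 // andbT.
apply/negP => /eqP h; move/eqP: mnz; apply; apply/rowP => k.
have := @psumr_eq0P _ _ xpredT (fun i : 'I_r => m 0 i * m 0 i) hge (esym h) k isT.
by move/eqP; rewrite mulf_eq0 orbb mxE => /eqP.
Qed.

Lemma approx (Gv : 'rV[R]_r) (m : 'rV[int]_r) (xs : seq 'rV[int]_r) :
  m != 0 -> dot Gv (zR R m) = 0 ->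
  exists gZ, dz gZ m = 0 /\
    forall x, x \in xs -> 0 < dot Gv (zR R x) -> 0 < dz gZ x.
Proof.
move=> mnz Gm.
pose E (x : 'rV[int]_r) : R :=
  n1 (zR R x) + n1 (zR R m) * `|dot (zR R m) (zR R x)|.
pose B x := if 0 < dot Gv (zR R x) then Num.Def.archi_bound (E x / dot Gv (zR R x))
            else 0%N.
pose N := \sum_(x <- xs) B x.
pose fl : 'rV[int]_r := \row_k Num.floor (N%:R * Gv 0 k).
exists ((dz m m) *: fl + (- dz fl m) *: m); split.
  by rewrite dzDl !dzZl mulNr mulrC subrr.
move=> x xin Gp.
have mm1 : (1 : R) <= (dz m m)%:~R.
  by rewrite ler1z -[1]add0r lezD1 dzmm_gt0.
pose Dl := zR R fl - N%:R *: Gv.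
have hD k : `|Dl 0 k| <= 1.
  rewrite !mxE ler_norml; have := floor_itv (N%:R * Gv 0 k).
  rewrite rmorphD /= => /andP [h1 h2]; apply/andP; split; last by lra.
  by lra.
have Fy y : dot (zR R fl) y = N%:R * dot Gv y + dot Dl y.
  by rewrite /Dl dotBl dotZl addrC subrK.
have -> : dz (dz m m *: fl + - dz fl m *: m) x =
          dz m m * dz fl x - dz fl m * dz m x.
  by rewrite dzDl !dzZl mulNr.
rewrite -(ltr0z R) rmorphB !rmorphM /= -!dot_zR !Fy Gm mulr0 add0r.
have hN : E x / dot Gv (zR R x) < N%:R.
  apply: (lt_le_trans (archi_boundP _)).
    apply: divr_ge0; last exact: ltW.
    by rewrite /E addr_ge0 ?mulr_ge0 ?n1_ge0.
  rewrite ler_nat; have := leq_sum_mem B xin; rewrite /B Gp; exact.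
rewrite ltr_pdivrMr // /E in hN.
have bX := dot_bound (zR R x) hD; have bm := dot_bound (zR R m) hD.
move: bX; rewrite ler_norml => /andP [bX1 bX2].
have bM : dot Dl (zR R m) * dot (zR R m) (zR R x) <=
          n1 (zR R m) * `|dot (zR R m) (zR R x)|.
  apply: le_trans (ler_norm _) _; rewrite normrM ler_wpM2r //.
have n1m0 : 0 <= n1 (zR R m) * `|dot (zR R m) (zR R x)|.
  by rewrite mulr_ge0 ?n1_ge0.
have prod : N%:R * dot Gv (zR R x) + dot Dl (zR R x) <=
   (dz m m)%:~R * (N%:R * dot Gv (zR R x) + dot Dl (zR R x)).
  by rewrite ler_peMl //; lra.
by rewrite [dot (zR R m) (zR R m)]dot_zR; lra.
Qed.


Lemma dz_delta (m : 'rV[int]_r) j : dz (delta_mx 0 j) m = m 0 j.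
Proof.
rewrite /dz (bigD1 j) //= big1 ?addr0 => [|i ij]; rewrite !mxE.
  by rewrite !eqxx mul1r.
by rewrite (negbTE ij) andbF mul0r.
Qed.

Lemma nz_entry (m : 'rV[int]_r) : m != 0 -> exists j, m 0 j != 0.
Proof.
move=> mnz; case: (boolP [exists j, m 0 j != 0]) => [/existsP //|/existsPn h].
move/eqP: mnz; case; apply/rowP => j; rewrite mxE; apply/eqP.
by move: (h j); rewrite negbK.
Qed.

Lemma bezout_vec (m : 'rV[int]_r) : m != 0 ->
  exists (d : nat) (h u : 'rV[int]_r), (0 < d)%N /\ dz h m = d%:Z /\ m = u *+ d.
Proof.
move=> mnz.
suff main : forall n (h : 'rV[int]_r), dz h m = n.+1%:Z ->
   exists (d : nat) (h u : 'rV[int]_r), (0 < d)%N /\ dz h m = d%:Z /\ m = u *+ d.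
  have [j mj] := nz_entry mnz.
  pose h := (if 0 < m 0 j then 1 else -1) *: delta_mx 0 j : 'rV[int]_r.
  have hm : dz h m = (absz (m 0 j))%:Z.
    rewrite /h dzZl dz_delta abszE; case: ifP => p.
      by rewrite mul1r gtr0_norm.
    rewrite mulN1r ltr0_norm // lt_neqAle mj /=.
    by rewrite leNgt p.
  move: hm; case E: (absz (m 0 j)) => [|n]; last exact: main.
  by move/eqP: E; rewrite absz_eq0 (negbTE mj).
elim/ltn_ind => n IH h hm.
case: (boolP [forall j, m 0 j \in dvdz n.+1%:Z]) => [/forallP all|/forallPn [j nd]].
  exists n.+1, h, (\row_j (divz (m 0 j) n.+1%:Z)); split => //; split => //.
  by apply/rowP => j; rewrite mulmxnE mxE -mulr_natr natz divzK //; apply: all.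
set q := divz (m 0 j) n.+1%:Z; set rho := modz (m 0 j) n.+1%:Z.
have r0 : 0 <= rho by apply: modz_ge0.
have rlt : rho < n.+1%:Z by apply: ltz_pmod.
have rnz : rho != 0 by apply: contra nd => /eqP r0'; apply/dvdz_mod0P.
have erho : rho = (`|rho|%N)%:Z by rewrite gez0_abs.
have hm' : dz (delta_mx 0 j - q *: h) m = rho.
  rewrite dzDl -scaleN1r !dzZl dz_delta hm mulN1r.
  by rewrite {1}(divz_eq (m 0 j) n.+1%:Z) -/q -/rho addrAC subrr add0r.
move: hm'; rewrite erho; case E: `|rho|%N => [|k] hm'.
  by move: rnz; rewrite erho E eqxx.
apply: (IH k) hm'; have : (k.+1 < n.+1)%N by rewrite -ltz_nat -E -erho.
by rewrite ltnS.
Qed.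

Lemma prim (M : 'rV[int]_r -> Prop) (m : 'rV[int]_r) :
  (forall z n, (0 < n)%N -> M (z *+ n) -> M z) -> M m ->
  (forall z, M z -> (ray (zR R m) (zR R z) <-> exists k : nat, z = m *+ k)) ->
  m != 0 -> exists h, dz h m = 1.
Proof.
move=> Hn Mm Hray mnz; have [d [h [u [d0 [hd emd]]]]] := bezout_vec mnz.
have Mu : M u by apply: (Hn u d d0); rewrite -emd.
have [k ek] : exists k : nat, u = m *+ k.
  apply/(Hray u Mu); exists (d%:R)^-1; split; first by rewrite invr_ge0 ler0n.
  by rewrite emd zRMn -scaler_nat scalerA mulVf ?scale1r // pnatr_eq0 -lt0n.
have [j mj] := nz_entry mnz.
have : m 0 j = m 0 j *+ (k * d).
  have e : m 0 j = (u *+ d) 0 j by rewrite -emd.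
  by rewrite {1}e ek -mulrnA mulmxnE.
move/eqP; rewrite -mulr_natr natz -[X in X == _]mulr1 (inj_eq (mulfI mj)).
move=> /eqP [kd1]; move/esym/eqP: kd1; rewrite muln_eq1 => /andP [_ /eqP d1].
by exists h; rewrite hd d1.
Qed.

Lemma ex_star (M : 'rV[int]_r -> Prop) (xs : seq 'rV[int]_r) (m gZ : 'rV[int]_r) :
  (2 <= r)%N ->
  (forall z, M z <-> exists cf : 'I_(size xs) -> nat,
      z = \sum_(i < size xs) xs`_i *+ cf i) ->
  (forall z : 'rV[int]_r, exists x y, M x /\ M y /\ z = x - y) ->
  (forall x, x \in xs -> 0 < dz gZ x \/ exists k : nat, x = m *+ k) ->
  exists xstar, xstar \in xs /\ 0 < dz gZ xstar.
Proof.
move=> r2 Hgen Hgp Hxs.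
case: (boolP (has (fun x => 0 < dz gZ x) xs)) => [/hasP [x xin gx]|/hasPn none].
  by exists x.
exfalso.
have ray x : x \in xs -> exists k : nat, x = m *+ k.
  move=> xin; case: (Hxs x xin) => // gp; by move: (none x xin); rewrite gp.
have Mray z : M z -> exists k : nat, z = m *+ k.
  case/Hgen => cf ->; apply: (big_ind (fun z => exists k : nat, z = m *+ k)).
  - by exists 0%N; rewrite mulr0n.
  - by move=> a b [ka ->] [kb ->]; exists (ka + kb)%N; rewrite mulrnDr.
  - move=> i _; have [k ->] := ray _ (mem_nth 0 (ltn_ord i)).
    by exists (k * cf i)%N; rewrite mulrnA.
have ent (k : 'I_r) : exists c : int,
    forall j, (delta_mx 0 k : 'rV[int]_r) 0 j = m 0 j * c.
  have [x [y [Mx [My e]]]] := Hgp (delta_mx 0 k).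
  have [a ea] := Mray x Mx; have [b eb] := Mray y My.
  exists (a%:Z - b%:Z) => j; rewrite e ea eb mxE mxE mulmxnE mulmxnE.
  by rewrite -(mulr_natr (m 0 j) a) -(mulr_natr (m 0 j) b) !natz mulrBr.
have i0 : (0 < r)%N by apply: leq_trans r2.
have i1 : (1 < r)%N by [].
have [c0 h0] := ent (Ordinal i0); have [c1 h1] := ent (Ordinal i1).
have e00 := h0 (Ordinal i0); have e01 := h0 (Ordinal i1).
have e10 := h1 (Ordinal i0); have e11 := h1 (Ordinal i1).
rewrite !mxE /= in e00 e01 e10 e11.
move/esym/eqP: e10; rewrite mulf_eq0 => /orP [/eqP m0|/eqP c10].
  by move: e00; rewrite m0 mul0r.
by move: e11; rewrite c10 mulr0.
Qed.


End Top.

Unset Implicit Arguments.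
Set Strict Implicit.

Theorem lemma3p4 (R : realType) (r : nat) (M : 'rV[int]_r -> Prop)
    (m : 'rV[int]_r) :
  (2 <= r)%N ->
  affine_positive_normal M ->
  extremal_generator R M m ->
  admissible_configuration R M m.
Proof.
move=> r2 [[xs Hgen] [Hgp [_ Hnorm]]].
move=> [Mm [[a0 [b0 [v0 [[_ [b0nz Hc0]] [Hpt0 [_ [l Hl]]]]]]] Hray]].
have r0 : (0 < r)%N by apply: leq_trans r2.
have mnz : m != 0.
  apply/eqP => m0.
  have [[t [t0 ev0]] Hv0] : ray (zR R m) v0 /\ @hyperplane R r a0 b0 v0 by apply/Hpt0.
  move: Hv0; rewrite /hyperplane ev0 m0 zR0 scaler0 dot0r => /eqP.
  by rewrite eq_sym fmorph_eq0 (negbTE b0nz).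
have [Gv [Gm HG]] := exG Hgen b0nz Hc0 Hpt0 Hl Hray.
have [gZ [gm Hg]] := approx xs mnz Gm.
have Hxs : forall x, x \in xs -> 0 < dz gZ x \/ exists k : nat, x = m *+ k.
  move=> x xin; case: (HG x xin) => [gp|e]; [left; exact: Hg | by right].
have [h0 h0m] := prim Hnorm Mm Hray mnz.
have [xstar [xsin xsg]] := ex_star r2 Hgen Hgp Hxs.
pose N0 := \sum_(x <- xs) `|dz h0 x|%N.
pose h1 := h0 + gZ *+ N0.
pose h2 := h1 + gZ.
pose aZ := h1 + gZ *+ 2.
have h1m : dz h1 m = 1 by rewrite dzDl dzMnl gm mul0rn addr0.
have h2m : dz h2 m = 1 by rewrite dzDl h1m gm addr0.
have Hh1 x : x \in xs -> 0 <= dz h1 x.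
  move=> xin; case: (Hxs x xin) => [gp|[k ->]]; last first.
    by rewrite dzMnr h1m mulrn_wge0.
  rewrite dzDl dzMnl -[dz h0 x]opprK addrC subr_ge0.
  have e1 : - dz h0 x <= (`|dz h0 x|%N)%:Z by rewrite abszE -normrN ler_norm.
  have e2 : (`|dz h0 x|%N)%:Z <= N0%:Z.
    by rewrite lez_nat; apply: (leq_sum_mem (fun x => `|dz h0 x|%N)).
  have e3 : N0%:Z <= dz gZ x *+ N0.
    by rewrite -natz lerMn2r -[1]add0r lezD1 gp orbT.
  exact: le_trans e1 (le_trans e2 e3).
have g0 x : x \in xs -> 0 <= dz gZ x.
  by move=> xin; case: (Hxs x xin) => [/ltW //|[k ->]]; rewrite dzMnr gm mul0rn.
have Hh2 x : x \in xs -> 0 <= dz h2 x.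
  by move=> xin; rewrite dzDl addr_ge0 ?Hh1 ?g0.
have HaZ1 : aZ = h1 + gZ *+ 2 by [].
have HaZ2 : aZ = h2 + gZ *+ 1 by rewrite /aZ /h2 mulr2n mulr1n addrA.
have Ha2 x : x \in xs -> dz aZ x <= dz h2 x *+ 2.
  move=> xin; rewrite HaZ2 mulr1n dzDl mulr2n lerD2l /h2 dzDl addrC lerDl.
  exact: Hh1.
have I1 := all_facts R Hgen Mm (isT : (0 < 2)%N) HaZ1 h1m gm Hxs Hh1 xsin xsg Hgp r0.
have I2 := all_facts R Hgen Mm (isT : (0 < 1)%N) HaZ2 h2m gm Hxs Hh2 xsin xsg Hgp r0.
case: I1 => [good1 [pt1 [rp1 [sub1 [tan1 [mp1 _]]]]]].
case: I2 => [_ [_ [rp2 [_ [tan2 [mp2 e2]]]]]].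
exists (iQ aZ), 1, (zR R m), (baseL m h1 gZ 2 xstar xs), (baseL m h2 gZ 1 xstar xs).
split; first exact: good1.
split; first exact: pt1.
split; first exact: rp1.
split; first exact: rp2.
split; first exact: sub1.
split; first by move=> y; apply: D12.
split; first exact: tan1.
split; first exact: tan2.
split; first exact: mp1.
split; first exact: mp2.
exact: e2.
Qed.
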